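(* Let $\lambda_{\max}>1$ and let $F:[0,\lambda_{\max}]\to\mathbb{R}_+$ be a continuously differentiable concave function with $F(0)=0$, such that $F(x)<F^\star$ for all $x\in[0,1)$ and $F'(1)>0$. Suppose moreover that $F$ is thrice continuously differentiable on $[0,1)$, that $\lim_{x\to1^-}F''(x)<0$, and that $\sup_{x<1}|F^{(3)}(x)|\le M$ for some $M<\infty$. Then there exist $C_1,\varepsilon_0>0$ (depending on $F$) such that $q^\star(\varepsilon)\ge C_1/\sqrt{\varepsilon}$ for all $\varepsilon\in(0,\varepsilon_0]$.
   Context: A control policy is a function $\lambda:\mathbb{Z}_+\to[0,\lambda_{\max}]$; it defines a continuous-time birth–death chain on $\mathbb{Z}_+$ with rate $\lambda(q)$ from $q$ to $q+1$ and rate $1$ from $q$ to $q-1$ ($q\ge1$). Let $\mathcal S$ be the set of states reachable from $0$. The policy is stable if $\sum_{i\in\mathcal S}\prod_{q=0}^{i}\lambda(q)<\infty$ (positive recurrence on $\mathcal S$); then $\pi$ is its stationary distribution and $\bar q\sim\pi$. $F^\star=\sup\{\mathbb{E}_\alpha[F(X)]:\alpha$ a probability measure on $[0,\lambda_{\max}]$, $X\sim\alpha$, $\mathbb{E}_\alpha[X]\le1\}$; regret $R(\lambda)=F^\star-\mathbb{E}_\pi[F(\lambda(\bar q))]$; $q^\star(\varepsilon)=\inf\{\mathbb{E}_\pi[\bar q]:\lambda$ stable, $R(\lambda)\le\varepsilon\}$. *)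

(* Defs.v *)
From HB Require Import structures.
From mathcomp Require Import all_boot all_order all_algebra.
From mathcomp Require Import all_classical all_reals all_analysis.
Set Implicit Arguments. Unset Strict Implicit. Unset Printing Implicit Defensive.
Import Order.TTheory GRing.Theory Num.Theory.
Import numFieldNormedType.Exports.
Local Open Scope classical_set_scope.
Local Open Scope ring_scope.

Section Defs.
Variable R : realType.

Definition deriv_within (A : set R) (f : R -> R) (x d : R) : Prop :=
  (fun y => (f y - f x) / (y - x)) @ within (fun y => A y /\ y != x) (nbhs x)
    --> d.

Definition concave_on (A : set R) (f : R -> R) : Prop :=
  forall x y t, A x -> A y -> 0 <= t <= 1 ->
    (1 - t) * f x + t * f y <= f ((1 - t) * x + t * y).

(** A probability measure on [0,lmax] is represented as a probability measure
    on (the Borel sets of) R giving full mass to [0,lmax]. *)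
Definition Fstar (F : R -> R) (lmax : R) : \bar R :=
  ereal_sup [set v | exists P : probability R R,
     P [set` `[0, lmax]] = 1%E /\
     (\int[P]_(x in [set` `[0%R, lmax]%R]) x%:E <= 1)%E /\
     v = (\int[P]_(x in [set` `[0%R, lmax]%R]) (F x)%:E)%E].

Definition policy (lmax : R) (lam : nat -> R) : Prop :=
  forall q, 0 <= lam q <= lmax.

(** states reachable from 0 in the birth-death chain
    (rate lam q from q to q+1, rate 1 from q+1 to q) *)
Inductive reach (lam : nat -> R) : nat -> Prop :=
| reach0 : reach lam 0
| reach_up q : reach lam q -> 0 < lam q -> reach lam q.+1
| reach_down q : reach lam q.+1 -> reach lam q.

Definition stable (lam : nat -> R) : Prop :=
  (\sum_(0 <= i <oo) (if `[< reach lam i >] then (\prod_(q < i.+1) lam q)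
                     else 0)%:E < +oo)%E.

(** pi is a stationary distribution of the chain: a probability distribution
    on Z_+ satisfying the global balance equations pi Q = 0 of the generator Q
    (Q(q,q+1) = lam q, Q(q+1,q) = 1). *)
Definition stationary (lam : nat -> R) (pi : nat -> R) : Prop :=
  (forall i, 0 <= pi i) /\
  (\sum_(0 <= i <oo) (pi i)%:E = 1)%E /\
  (pi 0%N * lam 0%N = pi 1%N) /\
  (forall i, pi i.+1 * (lam i.+1 + 1) = pi i * lam i + pi i.+2).

Definition reward (F : R -> R) (lam pi : nat -> R) : \bar R :=
  (\sum_(0 <= i <oo) (pi i * F (lam i))%:E)%E.

Definition mean_queue (pi : nat -> R) : \bar R :=
  (\sum_(0 <= i <oo) (i%:R * pi i)%:E)%E.

Definition regret (F : R -> R) (lmax : R) (lam pi : nat -> R) : \bar R :=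
  (Fstar F lmax - reward F lam pi)%E.

Definition qstar (F : R -> R) (lmax : R) (eps : R) : \bar R :=
  ereal_inf [set m | exists lam pi : nat -> R,
     policy lmax lam /\ stable lam /\ stationary lam pi /\
     (regret F lmax lam pi <= eps%:E)%E /\ m = mean_queue pi].

End Defs.

(* Main.v *)
Require Import Defs.
From HB Require Import structures.
From mathcomp Require Import all_boot all_order all_algebra.
From mathcomp Require Import all_classical all_reals all_analysis.
From mathcomp Require Import ring lra.
Import Order.TTheory GRing.Theory Num.Theory.
Import numFieldNormedType.Exports.
Local Open Scope classical_set_scope.
Local Open Scope ring_scope.
Set Implicit Arguments. Unset Strict Implicit.

Lemma deriv_interior (R : realType) (A : set R) (f : R -> R) (x d r : R) :
  0 < r -> (forall y, `|y - x| < r -> A y) ->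
  deriv_within A f x d -> is_derive x 1 f d.
Proof.
move=> r0 rA H.
have HH : (fun h : R => h^-1 *: ((f \o shift x) (h *: 1) - f x)) @ 0^' --> d.
  have -> : (fun h : R => h^-1 *: ((f \o shift x) (h *: 1) - f x)) =
     (fun y => (f y - f x) / (y - x)) \o (fun h => h + x).
    apply/funext => h /=; rewrite /shift /= addrK mulrC.
    by rewrite -[h%:A]/(h * 1) mulr1.
  apply: cvg_comp H.
  move=> S /= [e /= e0 HS].
  exists (Num.min e r) => /=; first by rewrite lt_min e0 r0.
  move=> h /= hb hn0.
  move: hb; rewrite /ball /= sub0r normrN lt_min => /andP[he hr].
  apply: HS => /=.
    by rewrite /ball /= opprD addrCA subrr addr0 normrN.
  split; first by apply: rA; rewrite addrK.
  by rewrite -subr_eq0 addrK.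
apply: DeriveDef; first by apply/cvg_ex; exists d.
by apply/cvg_lim.
Qed.

Lemma within_pt (R : realType) (A : set R) (f : R -> R) (x d : R) :
  deriv_within A f x d -> forall eps, 0 < eps -> exists2 e, 0 < e &
  forall y, `|x - y| < e -> A y -> y != x -> `|d - (f y - f x) / (y - x)| < eps.
Proof.
move=> H eps e0.
have := H (ball d eps) (nbhsx_ballx d eps e0).
move=> /= [e /= e1 He]; exists e => // y xy Ay yx.
by have := He y xy (conj Ay yx).
Qed.

Lemma concave_slope (R : realType) (A : set R) (F : R -> R) (x y z : R) :
  concave_on A F -> A y -> A x -> y < z -> z < x ->
  (F x - F z) / (x - z) <= (F z - F y) / (z - y).
Proof.
move=> cF Ay Ax yz zx.
set t := (z - y) / (x - y).
have xy : 0 < x - y by lra.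
have t0 : 0 <= t <= 1.
  apply/andP; split; first by rewrite divr_ge0 // ltW // subr_gt0.
  by rewrite ler_pdivrMr // mul1r; lra.
have := cF y x t Ay Ax t0.
have -> : (1 - t) * y + t * x = z by rewrite /t; field; rewrite gt_eqF.
rewrite /t => H.
have zy : 0 < z - y by lra.
have xz : 0 < x - z by lra.
rewrite ler_pdivrMr // mulrAC ler_pdivlMr //.
have := ler_wpM2l (ltW xy) H.
have -> : (x - y) * ((1 - (z - y) / (x - y)) * F y + (z - y) / (x - y) * F x) =
  (x - z) * F y + (z - y) * F x by field; rewrite gt_eqF.
lra.
Qed.

Lemma tangent_right (R : realType) (F : R -> R) (lmax a x0 x : R) :
  concave_on `[0, lmax] F -> deriv_within `[0, lmax] F x0 a ->
  0 < x0 -> x0 < x -> x <= lmax -> F x <= F x0 + a * (x - x0).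
Proof.
move=> cF dF x00 x0x xl.
set s := (F x - F x0) / (x - x0).
suff : s <= a.
  rewrite /s ler_pdivrMr ?subr_gt0 // => H; lra.
rewrite leNgt; apply/negP => as_.
have sa0 : 0 < s - a by rewrite subr_gt0.
have [e e0 He] := within_pt dF sa0.
set y := x0 - Num.min e x0 / 2.
have m0 : 0 < Num.min e x0 by rewrite lt_min e0 x00.
have me : Num.min e x0 <= e by rewrite ge_min lexx.
have mx : Num.min e x0 <= x0 by rewrite ge_min lexx orbT.
have yx0 : y < x0 by rewrite /y; lra.
have Ay : [set` `[0, lmax]] y by rewrite /= in_itv /=; apply/andP; split; rewrite /y; lra.
have Ax : [set` `[0, lmax]] x by rewrite /= in_itv /=; apply/andP; split; lra.
have d1 : `|x0 - y| < e by rewrite ger0_norm; rewrite /y; lra.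
have := He y d1 Ay (negbT (lt_eqF yx0)).
have E : (F y - F x0) / (y - x0) = (F x0 - F y) / (x0 - y).
  by rewrite -[F y - F x0]opprB -[y - x0]opprB invrN mulrNN.
rewrite E => H.
have := concave_slope cF Ay Ax yx0 x0x.
rewrite -/s => Hs.
move: H; rewrite ltr_norml => /andP[H1 _].
lra.
Qed.

Lemma deriv_itv (R : realType) (A : set R) (f : R -> R) (u v x d : R) :
  (forall y, u < y < v -> A y) -> u < x < v ->
  deriv_within A f x d -> is_derive x 1 f d.
Proof.
move=> uvA /andP[ux xv] H.
apply: (@deriv_interior _ A f x d (Num.min (x - u) (v - x))) => //.
  by rewrite lt_min !subr_gt0 ux xv.
move=> y; rewrite lt_min => /andP[h1 h2]; apply: uvA.
move: h1 h2; rewrite !ltr_norml => /andP[h1 h2] /andP[h3 h4].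
apply/andP; split; lra.
Qed.

Lemma left_lim (R : realType) (g : R -> R) (L : R) :
  g x @[x --> 1^'-] --> L -> forall eps, 0 < eps -> exists2 e, 0 < e &
  forall y, `|1 - y| < e -> y < 1 -> `|L - g y| < eps.
Proof.
move=> H eps e0.
have := H (ball L eps) (nbhsx_ballx L eps e0).
move=> /= [e /= e1 He]; exists e => // y xy y1.
Qed.

Lemma gap_bound (R : realType) (lmax : R) (F F1 F2 : R -> R) (L : R) :
  1 < lmax ->
  (forall x, 0 <= x <= lmax -> deriv_within `[0, lmax] F x (F1 x)) ->
  {within `[0, lmax], continuous F1} ->
  concave_on `[0, lmax] F ->
  (forall x, 0 <= x < 1 -> deriv_within `[0, 1[ F1 x (F2 x)) ->
  L < 0 -> F2 x @[x --> 1^'-] --> L ->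
  exists2 c, 0 < c & forall x, 0 <= x <= lmax ->
    F x <= F 1 + F1 1 * (x - 1) - c * (Num.max (1 - x) 0) ^+ 2.
Proof.
move=> l1 dFw cF1 cF dF1w L0 HL.
set a := F1 1.
set k := - L / 2.
have k0 : 0 < k by rewrite /k; lra.
have [e e0 He] := left_lim HL k0.
set d := Num.min (e / 2) (1 / 2).
have d0 : 0 < d by rewrite /d lt_min; apply/andP; split; lra.
have de : d < e by rewrite /d gt_min; apply/orP; left; lra.
have dh : d <= 1/2 by rewrite /d ge_min lexx orbT.
have hF2 : forall y : R, 1 - d < y < 1 -> F2 y <= - k.
  move=> y /andP[y1 y2].
  have := He y; rewrite ger0_norm; last by lra.
  move=> /(_ _ y2) => H.
  have : `|L - F2 y| < k by apply: H; lra.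
  rewrite ltr_norml /k => /andP[h1 h2]; lra.
have dF : forall z : R, 0 < z < lmax -> is_derive z 1 F (F1 z).
  move=> z /andP[z0 zl].
  apply: (deriv_itv (u:=0) (v:=lmax) _ _ (dFw z _)).
  - by move=> y /andP[y0 yl]; rewrite /= in_itv /= (ltW y0) (ltW yl).
  - by rewrite z0 zl.
  - by rewrite (ltW z0) (ltW zl).
have dF1 : forall z : R, 0 < z < 1 -> is_derive z 1 F1 (F2 z).
  move=> z /andP[z0 zl].
  apply: (deriv_itv (u:=0) (v:=1) _ _ (dF1w z _)).
  - by move=> y /andP[y0 yl]; rewrite /= in_itv /= (ltW y0) yl.
  - by rewrite z0 zl.
  - by rewrite (ltW z0) zl.
have H5 : forall y : R, 1 - d <= y <= 1 -> a + k * (1 - y) <= F1 y.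
  move=> y /andP[y1 y2].
  have [->|yn1] := eqVneq y 1; first by rewrite /a subrr mulr0 addr0.
  have ylt : y < 1 by rewrite lt_neqAle yn1 y2.
  have [c cI Hc] : exists2 c, c \in `]y, 1[ & F1 1 - F1 y = F2 c * (1 - y).
    apply: MVT => //.
      move=> c; rewrite in_itv /= => /andP[c1 c2]; apply: dF1.
      apply/andP; split; lra.
    apply: (continuous_subspaceW _ cF1) => z /=; rewrite !in_itv /= => /andP[z1 z2].
    apply/andP; split; lra.
  move: cI; rewrite in_itv /= => /andP[c1 c2].
  have : F2 c <= - k by apply: hF2; apply/andP; split; lra.
  rewrite /a; nra.
have mvtF : forall u v : R, 0 < u -> u < v -> v < lmax ->
    exists2 c, c \in `]u, v[ & F v - F u = F1 c * (v - u).
  move=> u v u0 uv vl; apply: MVT => //.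
    move=> c; rewrite in_itv /= => /andP[c1 c2]; apply: dF.
    apply/andP; split; lra.
  apply: (@derivable_within_continuous _ _ _ `[u, v]) => z; rewrite in_itv /= => /andP[z1 z2].
  have : 0 < z < lmax by apply/andP; split; lra.
  by move/dF => [].
have H6 : forall x : R, 1 - d <= x <= 1 -> F x <= F 1 + a * (x - 1) - k / 4 * (1 - x) ^+ 2.
  move=> x /andP[x1 x2].
  have [->|xn1] := eqVneq x 1; first by rewrite subrr mulr0 addr0 expr0n /= mulr0 subr0.
  have xlt : x < 1 by rewrite lt_neqAle xn1 x2.
  set m := (x + 1) / 2.
  have [c1 cI1 Hc1] := mvtF x m ltac:(lra) ltac:(rewrite /m; lra) ltac:(rewrite /m; lra).
  have [c2 cI2 Hc2] := mvtF m 1 ltac:(rewrite /m; lra) ltac:(rewrite /m; lra) l1.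
  move: cI1 cI2; rewrite !in_itv /= => /andP[c11 c12] /andP[c21 c22].
  have h1 := H5 c1 ltac:(apply/andP; split; rewrite /m in c12; lra).
  have h2 := H5 c2 ltac:(apply/andP; split; rewrite /m in c21 c22; lra).
  have e1 : m - x = (1 - x) / 2 by rewrite /m; field.
  have e2 : 1 - m = (1 - x) / 2 by rewrite /m; field.
  rewrite e1 in Hc1; rewrite e2 in Hc2.
  have hk1 : k * (1 - c1) >= k * ((1 - x) / 2).
    apply: ler_wpM2l; [lra | rewrite /m in c12; lra].
  have hk2 : 0 <= k * (1 - c2) by apply: mulr_ge0; lra.
  have p1 : 0 <= (1 - x) / 2 by lra.
  nra.
have H7 : forall x : R, 0 <= x < 1 - d -> F x <= F 1 + a * (x - 1) - k / 4 * d ^+ 2.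
  move=> x /andP[x0 x1].
  set p := 1 - d.
  have Ax : [set` `[0, lmax]] x by rewrite /= in_itv /= x0; lra.
  have A1 : [set` `[0, lmax]] 1 by rewrite /= in_itv /=; apply/andP; split; lra.
  have := concave_slope cF Ax A1 x1 ltac:(rewrite /p; lra).
  have := H6 p ltac:(rewrite /p; apply/andP; split; lra).
  have -> : 1 - p = d by rewrite /p; ring.
  move=> hp.
  rewrite ler_pdivrMr; last by rewrite /p; lra.
  rewrite mulrAC ler_pdivlMr; last by lra.
  have hd : 0 < d by [].
  have hpx : 0 < p - x by rewrite /p; lra.
  move=> hs.
  have : F 1 - F p >= a * d + k / 4 * d ^+ 2 by rewrite /p in hp *; lra.
  move=> hq.
  have : (F p - F x) * d >= (a * d + k / 4 * d ^+ 2) * (p - x).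
    apply: (le_trans _ hs); apply: ler_wpM2r; lra.
  move=> hr.
  have : F p - F x >= (a + k / 4 * d) * (p - x).
    have : (a + k / 4 * d) * (p - x) * d = (a * d + k / 4 * d ^+ 2) * (p - x) by ring.
    move=> E; rewrite -E in hr; rewrite -(ler_pM2r hd); exact: hr.
  move=> ht.
  have : 0 <= k / 4 * d * (p - x) by apply: mulr_ge0; [apply: mulr_ge0|]; lra.
  rewrite /p in hq ht *; nra.
exists (k / 4 * d ^+ 2); first by rewrite mulr_gt0 ?exprn_gt0 // divr_gt0.
move=> x /andP[x0 xl].
have d2 : d ^+ 2 <= 1 by rewrite expr2; nra.
have kd : 0 <= k / 4 by lra.
have [x1|x1] := ltP 1 x.
  have -> : Num.max (1 - x) 0 = 0 by apply/max_idPr; lra.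
  rewrite expr0n /= mulr0 subr0.
  apply: tangent_right cF _ ltr01 x1 xl.
  by apply: dFw; apply/andP; split; lra.
have -> : Num.max (1 - x) 0 = 1 - x by apply/max_idPl; lra.
have [xd|xd] := ltP x (1 - d).
  have := H7 x ltac:(apply/andP; split; lra).
  have : (1 - x) ^+ 2 <= 1 by rewrite expr2; nra.
  move=> h1 h2.
  have : k / 4 * d ^+ 2 * (1 - x) ^+ 2 <= k / 4 * d ^+ 2.
    rewrite ler_piMr //; apply: mulr_ge0 => //; rewrite sqr_ge0 //.
  lra.
have := H6 x ltac:(apply/andP; split; lra).
have : k / 4 * d ^+ 2 * (1 - x) ^+ 2 <= k / 4 * (1 - x) ^+ 2.
  rewrite -mulrA; apply: ler_wpM2l => //.
  by rewrite ler_piMl // sqr_ge0.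
lra.
Qed.
Lemma small_tail (R : realType) (pi : nat -> R) :
  (forall i, 0 <= pi i) -> (forall N, \sum_(0 <= i < N) pi i <= 1) ->
  forall eta, 0 < eta -> forall N1, exists2 M, (N1 <= M)%N & pi M < eta.
Proof.
move=> pi0 S1 eta eta0 N1.
apply: contrapT => H.
have H' : forall M, (N1 <= M)%N -> eta <= pi M.
  move=> M NM; rewrite leNgt; apply/negP => HM; apply: H; by exists M.
set k := (Num.truncn (eta^-1)).+1.
have H1 : k%:R * eta <= \sum_(N1 <= i < N1 + k) pi i.
  apply: (le_trans _ (ler_sum_nat (F := fun=> eta) _)).
    by rewrite sumr_const_nat addnC addnK mulr_natl.
  by move=> i /andP[Hi _]; apply: H'.
have H2 : \sum_(N1 <= i < N1 + k) pi i <= \sum_(0 <= i < N1 + k) pi i.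
  rewrite [X in _ <= X](big_cat_nat _ (n := N1)) //=; last by rewrite leq_addr.
  by rewrite lerDr sumr_ge0.
have H3 : 1 < k%:R * eta.
  have := real_truncnS_gt (num_real (eta^-1)).
  rewrite -/k => Hk.
  by rewrite -ltr_pdivrMr // div1r.
have := S1 (N1 + k)%N; lra.
Qed.

Lemma pi_bound (R : realType) (pi lam : nat -> R) (G : R -> R) (a c F1v eps s : R) :
  0 < c -> 0 <= a -> 0 <= F1v -> 0 < eps -> 0 < s ->
  (forall i, 0 <= pi i) -> (forall i, pi i.+1 = pi i * lam i) ->
  (forall i, 0 <= G (lam i)) ->
  (forall i, G (lam i) <= F1v + a * (lam i - 1) - c * (Num.max (1 - lam i) 0)^+2) ->
  (forall N, \sum_(0 <= i < N) pi i <= 1) ->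
  (forall eta, 0 < eta -> exists N, F1v - eps - eta < \sum_(0 <= i < N) pi i * G (lam i)) ->
  forall j, pi j <= eps + (2 + a) * eps / (2 * c * s) + s / 2.
Proof.
move=> c0 a0 F0 e0 s0 pi0 piS G0 gap S1 Rcv j.
have [N0 HN0] := Rcv eps e0.
have [M HM pM] := @small_tail _ _ pi0 S1 _ e0 (maxn N0 j).
have HN0M : (N0 <= M)%N by apply: leq_trans HM; rewrite leq_maxl.
have HjM : (j <= M)%N by apply: leq_trans HM; rewrite leq_maxr.
set h := fun i => Num.max (1 - lam i) 0.
set T := \sum_(0 <= i < M) pi i * h i ^+ 2.
set SM := \sum_(0 <= i < M) pi i.
have Rmono : \sum_(0 <= i < N0) pi i * G (lam i) <= \sum_(0 <= i < M) pi i * G (lam i).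
  rewrite [X in _ <= X](big_cat_nat _ (n := N0)) //=.
  by rewrite lerDl sumr_ge0 // => i _; rewrite mulr_ge0.
have Rgap : \sum_(0 <= i < M) pi i * G (lam i) <= F1v * SM + a * (pi M - pi 0) - c * T.
  apply: (le_trans (ler_sum_nat (G := fun i => F1v * pi i + a * (pi i.+1 - pi i) - c * (pi i * h i ^+ 2)) _)).
    move=> i _; rewrite piS.
    have := ler_wpM2l (pi0 i) (gap i); rewrite /h => H.
    apply: (le_trans H); rewrite le_eqVlt; apply/orP; left; apply/eqP; ring.
  rewrite big_split /= big_split /= sumrN -!mulr_sumr -/SM -/T telescope_sumr //.
have SM1 : SM <= 1 by apply: S1.
have hge i : 0 <= h i by rewrite /h le_max lexx orbT.
have Tge : 0 <= T by rewrite sumr_ge0 // => i _; rewrite mulr_ge0 // sqr_ge0.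
have SMge : 0 <= SM by rewrite sumr_ge0.
have cT : c * T <= (2 + a) * eps.
  have := pi0 0%N; have := pi0 M.
  have : F1v * SM <= F1v by rewrite ler_piMr.
  have : a * pi M <= a * eps by rewrite ler_wpM2l // ltW.
  nra.
have tele : pi j - pi M <= T / (2 * s) + SM * s / 2.
  have -> : pi j - pi M = \sum_(j <= i < M) pi i * (1 - lam i).
    rewrite -opprB -telescope_sumr // -sumrN; apply: eq_bigr => i _; rewrite piS; ring.
  apply: (le_trans (ler_sum_nat (G := fun i => pi i * h i) _)).
    move=> i _; apply: ler_wpM2l => //; rewrite /h le_max lexx //.
  apply: (@le_trans _ _ (\sum_(0 <= i < M) pi i * h i)).
    rewrite [X in _ <= X](big_cat_nat _ (n := j)) //=.
    by rewrite lerDr sumr_ge0 // => i _; rewrite mulr_ge0.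
  rewrite /T /SM !mulr_suml -big_split /=; apply: ler_sum_nat => i _.
  have : 0 <= pi i * (h i - s) ^+ 2 by rewrite mulr_ge0 // sqr_ge0.
  move: (pi0 i) => pi0i H.
  rewrite -subr_ge0.
  have -> : pi i * h i ^+ 2 / (2 * s) + pi i * s / 2 - pi i * h i = pi i * (h i - s) ^+ 2 / (2 * s).
    by field; rewrite gt_eqF.
  by rewrite divr_ge0 // mulr_ge0 // ltW.
have : T / (2 * s) <= (2 + a) * eps / (2 * c * s).
  rewrite ler_pdivrMr ?mulr_gt0 //.
  have -> : (2 + a) * eps / (2 * c * s) * (2 * s) = (2 + a) * eps / c.
    by field; rewrite !gt_eqF.
  by rewrite ler_pdivlMr // mulrC.
have : SM * s / 2 <= s / 2.
  nra.
lra.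
Qed.

Lemma mean_bound (R : realType) (pi : nat -> R) (P : R) :
  0 < P -> (forall i, 0 <= pi i) -> (forall i, pi i <= P) ->
  (exists N, 3/4 < \sum_(0 <= i < N) pi i) ->
  exists N, 1 / (8 * P) - 1/2 <= \sum_(0 <= i < N) i%:R * pi i.
Proof.
move=> P0 pi0 piP [N0 HN0].
set K := Num.truncn (1 / (4 * P)).
have HK := truncn_itv (ltW (divr_gt0 ltr01 (mulr_gt0 (ltr0n R 4) P0))).
rewrite -/K in HK; move/andP: HK => [HK1 HK2].
set N := maxn N0 K.
exists N.
have SN : 3/4 < \sum_(0 <= i < N) pi i.
  apply: (lt_le_trans HN0).
  rewrite [X in _ <= X](big_cat_nat _ (n := N0)) //=; last by rewrite leq_maxl.
  by rewrite lerDl sumr_ge0.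
have SK : \sum_(0 <= i < K) pi i <= K%:R * P.
  apply: (le_trans (ler_sum_nat (G := fun=> P) _)) => //.
  by rewrite sumr_const_nat subn0 mulr_natl.
have HS : \sum_(0 <= i < N) pi i = \sum_(0 <= i < K) pi i + \sum_(K <= i < N) pi i.
  by rewrite (big_cat_nat _ (n := K)) //= leq_maxr.
have H1 : K%:R * \sum_(K <= i < N) pi i <= \sum_(0 <= i < N) i%:R * pi i.
  rewrite [X in _ <= X](big_cat_nat _ (n := K)) //=; last by rewrite leq_maxr.
  apply: ler_wpDl; first by rewrite sumr_ge0 // => i _; rewrite mulr_ge0.
  rewrite mulr_sumr; apply: ler_sum_nat => i /andP[Ki _].
  by apply: ler_wpM2r => //; rewrite ler_nat.
have KP : K%:R * P <= 1/4.
  have := ler_wpM2r (ltW P0) HK1.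
  have -> : 1 / (4 * P) * P = 1/4 by field; rewrite gt_eqF.
  by [].
have K0 : 0 <= K%:R :> R by [].
have HK2' : 1 / (4 * P) - 1 < K%:R by move: HK2; rewrite -natr1; lra.
have HK3 : 1 / (8 * P) <= 1 / (4 * P) / 2.
  have -> : 1 / (8 * P) = 1 / (4 * P) / 2 by field; rewrite gt_eqF.
  by [].
nra.
Qed.

Lemma ser_ge (R : realType) (u : nat -> R) N : (forall i, 0 <= u i) ->
  ((\sum_(0 <= i < N) u i)%:E <= \sum_(0 <= i <oo) (u i)%:E)%E.
Proof.
move=> u0; rewrite -sumEFin.
by apply: (nneseries_lim_ge (P := xpredT)) => n _ _; rewrite lee_fin.
Qed.

Lemma ser_le (R : realType) (u : nat -> R) (x : R) : (forall i, 0 <= u i) ->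
  (\sum_(0 <= i <oo) (u i)%:E <= x%:E)%E -> forall N, \sum_(0 <= i < N) u i <= x.
Proof.
move=> u0 H N; rewrite -lee_fin; exact: le_trans (ser_ge N u0) H.
Qed.

Lemma ser_gt (R : realType) (u : nat -> R) (x : R) : (forall i, 0 <= u i) ->
  (x%:E < \sum_(0 <= i <oo) (u i)%:E)%E -> exists N, x < \sum_(0 <= i < N) u i.
Proof.
move=> u0 H; apply: contrapT => H'.
have H2 : forall N, ((\sum_(0 <= i < N) (u i)%:E) <= x%:E)%E.
  move=> N; rewrite sumEFin lee_fin leNgt; apply/negP => HN; apply: H'; by exists N.
have : (\sum_(0 <= i <oo) (u i)%:E <= x%:E)%E.
  apply: lime_le.
    by apply: (is_cvg_nneseries (P := xpredT)) => n _ _; rewrite lee_fin.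
  by apply: nearW.
by rewrite leNgt H.
Qed.

Lemma reward_gt (R : realType) (fs rw : \bar R) (F1v eps eta : R) : 0 < eta ->
  (F1v%:E <= fs)%E -> (fs - rw <= eps%:E)%E -> (0 <= rw)%E ->
  ((F1v - eps - eta)%:E < rw)%E.
Proof.
move=> eta0 H1 H2 H3; rewrite ltNge; apply/negP => H.
case: rw H2 H3 H => [r| |] //= H2 H3 H.
case: fs H1 H2 => [f| |] //= H1 H2.
move: H1 H2 H H3; rewrite -EFinD !lee_fin => H1 H2 H H3. lra.
Qed.

Unset Implicit Arguments.

Theorem propositionC3 (R : realType) (lmax : R) (F F1 F2 F3 : R -> R) (M : R) :
  1 < lmax ->
  (forall x, 0 <= x <= lmax -> 0 <= F x) ->
  (* F is continuously differentiable on [0, lmax] with derivative F1 *)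
  (forall x, 0 <= x <= lmax -> deriv_within `[0, lmax] F x (F1 x)) ->
  {within `[0, lmax], continuous F1} ->
  concave_on `[0, lmax] F ->
  F 0 = 0 ->
  (forall x, 0 <= x < 1 -> ((F x)%:E < Fstar F lmax)%E) ->
  0 < F1 1 ->
  (* F is thrice continuously differentiable on [0, 1) *)
  (forall x, 0 <= x < 1 -> deriv_within `[0, 1[ F1 x (F2 x)) ->
  (forall x, 0 <= x < 1 -> deriv_within `[0, 1[ F2 x (F3 x)) ->
  {within `[0, 1[, continuous F3} ->
  (exists2 L : R, L < 0 & F2 x @[x --> 1^'-] --> L) ->
  (forall x, 0 <= x < 1 -> `|F3 x| <= M) ->
  exists C1 eps0 : R, [/\ 0 < C1, 0 < eps0 &
    forall eps, 0 < eps <= eps0 ->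
      ((C1 / Num.sqrt eps)%:E <= qstar F lmax eps)%E].
Proof.
move=> l1 Fge0 dFw cF1 cF F00 HFs a0 dF1w _ _ [L L0 HL] _.
have [c c0 gap] := gap_bound l1 dFw cF1 cF dF1w L0 HL.
have A0 : [set` `[0, lmax]] 0 by rewrite /= in_itv /= lexx; lra.
have A1 : [set` `[0, lmax]] 1 by rewrite /= in_itv /=; apply/andP; split; lra.
have F1ge0 : 0 <= F 1 by apply: Fge0; apply/andP; split; lra.
have Fs1 : ((F 1)%:E <= Fstar F lmax)%E.
  have lin : forall x, 0 <= x <= 1 -> x * F 1 <= F x.
    move=> x /andP[x0 x1].
    have := cF 0 1 x A0 A1 ltac:(apply/andP; split; lra).
    by rewrite F00 !mulr0 !add0r mulr1.
  case E : (Fstar F lmax) => [r| |] //.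
    have := HFs 0 ltac:(apply/andP; split; lra); rewrite E F00 lte_fin => r0.
    rewrite lee_fin leNgt; apply/negP => rF.
    set x := (r / F 1 + 1) / 2.
    have F1p : 0 < F 1 by lra.
    have rF1 : r / F 1 < 1 by rewrite ltr_pdivrMr // mul1r.
    have rF0 : 0 < r / F 1 by rewrite divr_gt0.
    have := HFs x ltac:(rewrite /x; apply/andP; split; lra).
    rewrite E lte_fin => Hx.
    have := lin x ltac:(rewrite /x; apply/andP; split; lra).
    have : x * F 1 = (r + F 1) / 2 by rewrite /x; field; rewrite gt_eqF.
    lra.
  by rewrite leey.
  have := HFs 0 ltac:(apply/andP; split; lra); rewrite E => H; exfalso; move: H; by rewrite ltNge leNye.
set B := 1 + (2 + F1 1) / (2 * c) + 1 / 2.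
have B1 : 1 <= B.
  have H2a : 0 <= 2 + F1 1 by lra.
  have H2c : 0 <= 2 * c by lra.
  have := divr_ge0 H2a H2c.
  rewrite /B; lra.
have B0 : 0 < B by lra.
exists (1 / (16 * B)), ((1 / (8 * B)) ^+ 2); split.
- by rewrite divr_gt0 // mulr_gt0.
- by rewrite exprn_gt0 // divr_gt0 // mulr_gt0.
move=> eps /andP[e0 ee0].
set s := Num.sqrt eps.
have s0 : 0 < s by rewrite sqrtr_gt0.
have s2 : s ^+ 2 = eps by rewrite sqr_sqrtr // ltW.
have sB : s <= 1 / (8 * B).
  have := ee0; rewrite -(ler_sqrt (eps) (exprn_ge0 2 (ltW (divr_gt0 ltr01 (mulr_gt0 (ltr0n R 8) B0))))).
  by rewrite sqrtr_sqr ger0_norm // ltW // divr_gt0 // mulr_gt0.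
apply: le_ereal_inf_tmp => m [lam [pi [pol [stab [stat [reg ->]]]]]].
move: stat => [pi0 [sum1 [bal0 balS]]].
have piS : forall i, pi i.+1 = pi i * lam i.
  elim => [|i IH]; first by rewrite bal0.
  have := balS i; rewrite -IH => H; nra.
have Gge : forall i, 0 <= F (lam i) by move=> i; apply: Fge0; apply: pol.
have gapi : forall i, F (lam i) <= F 1 + F1 1 * (lam i - 1) - c * Num.max (1 - lam i) 0 ^+ 2.
  by move=> i; apply: gap; apply: pol.
have S1 : forall N, \sum_(0 <= i < N) pi i <= 1 by apply: ser_le pi0 _; rewrite sum1.
have Sc : exists N, 3/4 < \sum_(0 <= i < N) pi i.
  by apply: ser_gt pi0 _; rewrite sum1 lte_fin; lra.
have Rc : forall eta, 0 < eta -> exists N, F 1 - eps - eta < \sum_(0 <= i < N) pi i * F (lam i).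
  move=> eta eta0; apply: ser_gt; first by move=> i; apply: mulr_ge0.
  move: reg; rewrite /regret /reward => reg.
  apply: (reward_gt eta0 Fs1 reg).
  by apply: nneseries_ge0 => n _ _; rewrite lee_fin mulr_ge0.
have Pb := pi_bound (G:=F) c0 (ltW a0) F1ge0 e0 s0 pi0 piS Gge gapi S1 Rc.
set P := eps + (2 + F1 1) * eps / (2 * c * s) + s / 2 in Pb.
have sl1 : s <= 1.
  apply: (le_trans sB); rewrite ler_pdivrMr ?mulr_gt0 // mul1r; lra.
have E1 : (2 + F1 1) * eps / (2 * c * s) = s * ((2 + F1 1) / (2 * c)).
  by rewrite -s2; field; rewrite !gt_eqF.
have PsB : P <= s * B.
  rewrite /P E1 /B.
  have : eps <= s by rewrite -s2 expr2; nra.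
  lra.
have P0 : 0 < P.
  rewrite /P E1; have : 0 <= (2 + F1 1) / (2 * c) by rewrite divr_ge0 //; lra.
  nra.
have [N HN] := mean_bound P0 pi0 Pb Sc.
apply: le_trans (ser_ge N _); last by move=> i; rewrite mulr_ge0.
rewrite lee_fin; apply: le_trans HN.
have h1 : 1 / (8 * (s * B)) <= 1 / (8 * P).
  rewrite !div1r lef_pV2 ?posrE ?mulr_gt0 //; lra.
have h2 : 8 * B * s <= 1.
  move: sB; rewrite ler_pdivlMr ?mulr_gt0 // mulrC; lra.
have E2 : 1 / (8 * (s * B)) = 2 * (1 / (16 * B) / s) by field; rewrite !gt_eqF.
have h3 : 1 / 2 <= 1 / (16 * B) / s.
  have -> : 1 / (16 * B) / s = 1 / (16 * B * s) by field; rewrite !gt_eqF.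
  rewrite !div1r lef_pV2 ?posrE ?mulr_gt0 //; lra.
lra.
Qed.
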